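(* Let $k=\mathbb C$, $n\ge2$, $A=\mathbb C_{-1}[x_1,\dots,x_n]$, and let $M(n,1,2)$ be the subgroup of $\mathrm{Aut}(A)$ generated by the mystic reflections $\tau_{i,j,1}$ ($i\ne j$), identified via its action on $A_1$ in the basis $x_1,\dots,x_n$ with a group of $n\times n$ matrices. Then $M(n,1,2)$ is the group of $n\times n$ signed permutation matrices (permutation matrices with entries replaced by $\pm1$) of determinant $1$, of order $2^{n-1}n!$, and $M(n,1,2)$ is isomorphic to the classical reflection group $G(2,2,n)$ if and only if $n$ is odd.
   Context: $A=\mathbb C_{-1}[x_1,\dots,x_n]$ is generated by $x_1,\dots,x_n$ with $x_jx_i=-x_ix_j$ for $i\ne j$. For $s\ne t$, $\tau_{s,t,1}$ is the graded automorphism with $x_s\mapsto x_t$, $x_t\mapsto-x_s$, $x_i\mapsto x_i$ otherwise. $G(2,2,n)$ is the group of $n\times n$ matrices $DP$ with $P$ a permutation matrix and $D$ a diagonal matrix with entries $\pm1$ containing an even number of $-1$'s. *)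

(* Defs.v *)
(* k = C is modelled by algC (algebraic complex numbers);
   all matrices involved have entries in {0,1,-1}. *)
From HB Require Import structures.
From mathcomp Require Import all_boot all_order all_algebra all_fingroup all_field.
Set Implicit Arguments. Unset Strict Implicit. Unset Printing Implicit Defensive.
Import GRing.Theory Num.Theory.
Local Open Scope ring_scope.

(* Matrix of the mystic reflection tau_{s,t,1} acting on A_1 in the basis
   x_1..x_n (column j = coordinates of the image of x_j):
   x_s |-> x_t, x_t |-> - x_s, x_i |-> x_i otherwise. *)
Definition tau_mx (n : nat) (s t : 'I_n) : 'M[algC]_n :=
  \matrix_(i, j) (if j == s then (i == t)%:R
                  else if j == t then - (i == s)%:R
                  else (i == j)%:R).

Inductive Mn12 (n : nat) : 'M[algC]_n -> Prop :=
| Mn12_one : Mn12 1%:M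
| Mn12_tau (s t : 'I_n) : s != t -> Mn12 (tau_mx s t)
| Mn12_mul (A B : 'M[algC]_n) : Mn12 A -> Mn12 B -> Mn12 (A *m B)
| Mn12_inv (A : 'M[algC]_n) : Mn12 A -> Mn12 (invmx A).

Definition signed_perm_mx (n : nat) (M : 'M[algC]_n) : Prop :=
  exists (d : 'rV[algC]_n) (p : 'S_n),
    (forall i, d 0 i = 1 \/ d 0 i = -1) /\ M = diag_mx d *m perm_mx p.

Definition G22n (n : nat) (M : 'M[algC]_n) : Prop :=
  exists (d : 'rV[algC]_n) (p : 'S_n),
    (forall i, d 0 i = 1 \/ d 0 i = -1) /\
    ~~ odd #|[set i | d 0 i == -1]| /\ M = diag_mx d *m perm_mx p.

Definition mx_group_isomorphic (n : nat) (G H : 'M[algC]_n -> Prop) : Prop :=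
  exists f : 'M[algC]_n -> 'M[algC]_n,
    [/\ (forall A, G A -> H (f A)),
        (forall A B, G A -> G B -> f A = f B -> A = B),
        (forall C, H C -> exists2 A, G A & f A = C) &
        (forall A B, G A -> G B -> f (A *m B) = f A *m f B)].

(* Main.v *)
Require Import Defs.
From HB Require Import structures.
From mathcomp Require Import all_boot all_order all_algebra all_fingroup all_field.
Set Implicit Arguments. Unset Strict Implicit. Unset Printing Implicit Defensive.
Import GRing.Theory Num.Theory.
Local Open Scope ring_scope.

Definition sg (k : bool) : algC := (-1) ^+ k.

Lemma sgF : sg false = 1. Proof. by []. Qed.
Lemma sgT : sg true = -1. Proof. by rewrite /sg expr1. Qed.
Lemma m1neq1 : (-1 : algC) != 1.
Proof. by rewrite eq_sym -subr_eq0 opprK (_ : 1 + 1 = 2%:R) // pnatr_eq0. Qed.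
Lemma sg_eq1 k : (sg k == 1) = ~~ k.
Proof. by case: k; rewrite ?sgT ?sgF ?eqxx ?(negbTE m1neq1). Qed.
Lemma sg_eqm1 k : (sg k == -1) = k.
Proof. by case: k; rewrite ?sgT ?sgF ?eqxx // eq_sym (negbTE m1neq1). Qed.
Lemma sg_inj : injective sg.
Proof. by move=> [] [] //; rewrite sgT sgF => /eqP; rewrite ?(negbTE m1neq1) // eq_sym (negbTE m1neq1). Qed.
Lemma sg_neq0 k : sg k != 0.
Proof. by rewrite /sg signr_eq0. Qed.
Lemma sgD k l : sg (k (+) l) = sg k * sg l.
Proof. exact: signr_addb. Qed.

Section SP.
Variable n : nat.
Implicit Types (b c : {ffun 'I_n -> bool}) (p q : 'S_n).

Definition par b : bool := \big[addb/false]_i b i.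
Definition mk b p : 'M[algC]_n :=
  \matrix_(i, j) (if p i == j then sg (b i) else 0).
Definition bmul b p c : {ffun 'I_n -> bool} := [ffun i => b i (+) c (p i)].
Definition bF : {ffun 'I_n -> bool} := [ffun _ => false].
Definition bT : {ffun 'I_n -> bool} := [ffun _ => true].
Definition binv b p : {ffun 'I_n -> bool} := [ffun i => b ((p^-1)%g i)].
Definition bx b k : {ffun 'I_n -> bool} := [ffun i => b i (+) k].

Lemma mkE b p i j : mk b p i j = if p i == j then sg (b i) else 0.
Proof. by rewrite mxE. Qed.

Lemma mkM b p c q : mk b p *m mk c q = mk (bmul b p c) (p * q).
Proof.
apply/matrixP=> i j; rewrite !mxE (bigD1 (p i)) //= big1 => [|k kp].
  rewrite !mxE eqxx permM ffunE sgD addr0.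
  by case: eqP => _; rewrite ?mulr0 ?mulrA.
by rewrite !mxE eq_sym (negbTE kp) mul0r.
Qed.

Lemma mk1 : mk bF 1 = 1%:M.
Proof. by apply/matrixP=> i j; rewrite !mxE perm1 ffunE sgF; case: eqP. Qed.

Lemma mk_inj b p c q : mk b p = mk c q -> b = c /\ p = q.
Proof.
move=> e.
have H i : q i = p i /\ b i = c i.
  have := congr1 (fun M : 'M[algC]_n => M i (p i)) e; rewrite !mxE eqxx.
  case: eqP => [-> /sg_inj -> //|_ /eqP H]; by have := sg_neq0 (b i); rewrite H.
by split; [apply/ffunP | apply/permP] => i; case: (H i).
Qed.

Lemma mkD b p : mk b p = diag_mx (\row_i sg (b i)) *m perm_mx p.
Proof.
apply/matrixP=> i j; rewrite mul_diag_mx perm_mxEsub !mxE. by case: eqP; rewrite ?mulr1 ?mulr0.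
Qed.

Lemma parE b : par b = odd #|[set i | b i]|.
Proof.
rewrite -sum1_card big_mkcond /= /par (big_morph odd (id1 := false) (op1 := addb)) //; last exact: oddD.
by apply: eq_bigr => i _; rewrite inE; case: (b i).
Qed.

Lemma par_bmul b p c : par (bmul b p c) = par b (+) par c.
Proof.
rewrite /par [X in _ = _ (+) X](reindex_inj (@perm_inj _ p)) /= -big_split /=.
by apply: eq_bigr => i _; rewrite ffunE.
Qed.

Lemma par_binv b p : par (binv b p) = par b.
Proof.
rewrite /par (reindex_inj (@perm_inj _ p)) /=.
by apply: eq_bigr => i _; rewrite ffunE permK.
Qed.

Lemma par_bF : par bF = false.
Proof. by rewrite /par big1 // => i _; rewrite ffunE. Qed.

Lemma par_const k : par [ffun _ => k] = odd n && k.
Proof.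
rewrite /par (eq_bigr (fun _ => k)) => [|i _]; last by rewrite ffunE.
rewrite big_const_ord; elim: n => //= m ->; by case: k; rewrite ?andbT ?andbF.
Qed.

Lemma par_bx b k : par (bx b k) = par b (+) (odd n && k).
Proof.
rewrite -par_const /par -big_split /=.
by apply: eq_bigr => i _; rewrite !ffunE.
Qed.

Lemma par_e s : par [ffun i => i == s] = true.
Proof.
rewrite /par (bigD1 s) //= big1 => [|i]; rewrite ffunE ?eqxx //.
by move/negbTE.
Qed.

Lemma mk_unit b p : mk b p *m mk (binv b p) (p^-1)%g = 1%:M.
Proof.
rewrite mkM mulgV -mk1; congr mk; apply/ffunP=> i.
by rewrite !ffunE permK addbb.
Qed.

Lemma mk_unitmx b p : mk b p \in unitmx.
Proof. by case: (mulmx1_unit (mk_unit b p)). Qed.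

Lemma mk_inv b p : invmx (mk b p) = mk (binv b p) (p^-1)%g.
Proof.
by rewrite -[invmx _]mulmx1 -(mk_unit b p) mulmxA mulVmx ?mk_unitmx ?mul1mx.
Qed.

Lemma prod_sg b : \prod_i sg (b i) = sg (par b).
Proof.
by rewrite /par (big_morph sg (id1 := 1) (op1 := *%R) sgD).
Qed.

Lemma mk_det b p : \det (mk b p) = sg (par b (+) odd_perm p).
Proof.
rewrite mkD det_mulmx det_diag det_perm sgD -prod_sg; congr (_ * _).
by apply: eq_bigr => i _; rewrite mxE.
Qed.

Ltac neqs := repeat match goal with
 | H : is_true (?x != ?y) |- context[?x == ?y] => rewrite (negbTE H)
 | H : is_true (?x != ?y) |- context[?y == ?x] => rewrite (eq_sym y x) (negbTE H)
end.

Lemma tau_mk s t : s != t -> tau_mx s t = mk [ffun i => i == s] (tperm s t).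
Proof.
move=> st; apply/matrixP=> i j; rewrite !mxE ffunE.
case: tpermP => [->|->|/eqP ni /eqP nt];
  (have [js|js] := eqVneq j s; [subst j|have [jt|jt] := eqVneq j t; [subst j|]]);
  neqs; rewrite ?eqxx ?sgT ?sgF //= ?oppr0 //; neqs; rewrite ?eqxx //. by case: eqP.
Qed.

Lemma sg_scale k b p : sg k *: mk b p = mk (bx b k) p.
Proof.
apply/matrixP=> i j; rewrite !mxE ffunE sgD.
by case: eqP; rewrite ?mulr0 // mulrC.
Qed.

Lemma rowsum_mk b p i : \sum_j mk b p i j = sg (b i).
Proof.
rewrite (bigD1 (p i)) //= big1 => [|j jp]; first by rewrite mkE eqxx addr0.
by rewrite mkE eq_sym (negbTE jp).
Qed.

End SP.
Arguments bF {n}.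
Arguments bT {n}.
Section Gen.
Variable n : nat.
Implicit Types (b c : {ffun 'I_n -> bool}) (p q : 'S_n).

Lemma Mn12_mk M : Mn12 M -> exists b p, M = mk b p /\ par b = odd_perm p.
Proof.
elim=> [|s t st|A B _ [b [p [-> hb]]] _ [c [q [-> hc]]]|A _ [b [p [-> hb]]]].
- by exists bF, 1%g; rewrite mk1 par_bF odd_perm1.
- by exists [ffun i => i == s], (tperm s t); rewrite tau_mk // par_e odd_tperm st.
- by exists (bmul b p c), (p * q)%g; rewrite mkM par_bmul odd_permM hb hc.
- by exists (binv b p), (p^-1)%g; rewrite mk_inv par_binv odd_permV.
Qed.

Lemma tau2 (s t : 'I_n) : s != t ->
  tau_mx s t *m tau_mx s t = mk (bmul [ffun i => i == s] (tperm s t) [ffun i => i == s]) 1.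
Proof. by move=> st; rewrite tau_mk // mkM tperm2. Qed.

Lemma Mn12_diag c : par c = false -> Mn12 (mk c 1).
Proof.
have [k] := ubnP #|[set i | c i]|; elim: k c => // k IH c; rewrite ltnS => Hk Hc.
have [E0 | ] := eqVneq [set i | c i] set0.
  have -> : c = bF.
    apply/ffunP=> i; rewrite ffunE; apply/negbTE; apply/negP => ci.
    have : i \in [set i | c i] by rewrite inE.
    by rewrite E0 inE.
  by rewrite mk1; constructor.
case/set0Pn => s; rewrite inE => cs.
have [t /andP[ts ct]] : exists t, (t != s) && c t.
  suff : [exists t, (t != s) && c t] by case/existsP => t; exists t.
  case: (boolP [exists t, (t != s) && c t]) => [//|/existsPn H].
  move: Hc; rewrite /par (bigD1 s) //= big1 ?cs // => i nis.
  by have := H i; rewrite nis /=; move/negbTE.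
have st : s != t by rewrite eq_sym.
pose c' := [ffun i => c i && (i != s) && (i != t)].
have Ec : c = bmul c' 1 (bmul [ffun i => i == s] (tperm s t) [ffun i => i == s]).
  apply/ffunP=> i; rewrite !ffunE perm1 ?ffunE.
  case: tpermP => [->|->|/eqP ni /eqP nt].
  - by rewrite !eqxx cs (eq_sym t s) (negbTE st) /= ?andbF.
  - by rewrite !eqxx ct (negbTE ts) /= ?andbF.
  - by rewrite addbb ni nt !andbT addbF.
have -> : mk c 1 = mk c' 1 *m (tau_mx s t *m tau_mx s t).
  by rewrite tau2 // mkM mul1g -Ec.
apply: Mn12_mul; last by apply: Mn12_mul; constructor.
apply: IH.
  have sub : [set i | c' i] \subset [set i | c i] :\ s.
    by apply/subsetP=> i; rewrite !inE ffunE => /andP[/andP[-> ->] _].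
  apply: leq_ltn_trans (subset_leq_card sub) _.
  by rewrite (cardsD1 s [set i | c i]) inE cs add1n in Hk.
by move: Hc; rewrite Ec par_bmul par_bmul addbb addbF.
Qed.

Lemma Mn12_perm p : exists b, Mn12 (mk b p).
Proof.
have [ts -> _] := prod_tpermP p.
elim: ts => [|[a c] ts [b IH]] /=.
  by exists bF; rewrite big_nil mk1; constructor.
rewrite big_cons /=.
have [<-|ac] := eqVneq a c; first by rewrite tperm1 mul1g; exists b.
exists (bmul [ffun i => i == a] (tperm a c) b).
by rewrite -mkM -tau_mk //; apply: Mn12_mul => //; constructor.
Qed.

Lemma Mn12_gen b p : par b = odd_perm p -> Mn12 (mk b p).
Proof.
move=> hb; have [b' Hb'] := Mn12_perm p.
have [b'' [p'' [E h'']]] := Mn12_mk Hb'.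
case: (mk_inj E) => eb ep; subst b'' p''.
pose c := [ffun i => b i (+) b' i].
have -> : mk b p = mk c 1 *m mk b' p.
  rewrite mkM mul1g; congr mk; apply/ffunP=> i.
  by rewrite !ffunE perm1 -addbA addbb addbF.
apply: Mn12_mul => //; apply: Mn12_diag.
have -> : c = bmul b 1 b' by apply/ffunP=> i; rewrite !ffunE perm1.
by rewrite par_bmul hb h'' addbb.
Qed.

Lemma Mn12_iff b p : Mn12 (mk b p) <-> par b = odd_perm p.
Proof.
split; last exact: Mn12_gen.
case/Mn12_mk => b' [p' [E h]]; by case: (mk_inj E) => -> ->.
Qed.

Lemma signed_perm_mk (M : 'M[algC]_n) :
  signed_perm_mx M <-> exists b p, M = mk b p.
Proof.
split.
  case=> d [p [Hd ->]]; exists [ffun i => d 0 i == -1], p; rewrite mkD.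
  congr (diag_mx _ *m _); apply/rowP=> i; rewrite !mxE ffunE.
  case: (Hd i) => ->; rewrite ?sgT ?sgF ?eqxx //.
  by rewrite eq_sym (negbTE m1neq1).
case=> b [p ->]; exists (\row_i sg (b i)), p; split; last exact: mkD.
by move=> i; rewrite mxE; case: (b i); [right; rewrite sgT | left].
Qed.

Lemma det_mk1 b p : (\det (mk b p) = 1) <-> par b = odd_perm p.
Proof.
rewrite mk_det; split; first by move/eqP; rewrite sg_eq1; case: (par b); case: (odd_perm p).
by move=> ->; rewrite addbb.
Qed.

Lemma part1 (M : 'M[algC]_n) : Mn12 M <-> (signed_perm_mx M /\ \det M = 1).
Proof.
split.
  case/Mn12_mk => b [p [-> h]]; split; first by apply/signed_perm_mk; exists b, p.
  by apply/det_mk1.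
case=> /signed_perm_mk [b [p ->]] /det_mk1; exact: Mn12_gen.
Qed.

Lemma G22n_mk (M : 'M[algC]_n) :
  G22n M <-> exists b p, M = mk b p /\ par b = false.
Proof.
split.
  case=> d [p [Hd [Hodd ->]]]; exists [ffun i => d 0 i == -1], p; split.
    rewrite mkD; congr (diag_mx _ *m _); apply/rowP=> i; rewrite !mxE ffunE.
    case: (Hd i) => ->; rewrite ?sgT ?sgF ?eqxx //.
    by rewrite eq_sym (negbTE m1neq1).
  rewrite parE; apply/negbTE; congr (~~ odd _): Hodd; apply: eq_card => i.
  by rewrite !inE ffunE.
case=> b [p [-> hb]]; exists (\row_i sg (b i)), p; split.
  by move=> i; rewrite mxE; case: (b i); [right; rewrite sgT | left].
split; last exact: mkD.
suff -> : [set i | (\row_i0 sg (b i0)) 0 i == -1] = [set i | b i] by rewrite -parE hb.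
by apply/setP=> i; rewrite !inE mxE sg_eqm1.
Qed.

End Gen.
Section Count.
Variable n : nat.

Definition SBset := [set x : {ffun 'I_n -> bool} * 'S_n | par x.1 == odd_perm x.2].

Lemma card_SB (hn : (0 < n)%N) : #|SBset| = (2 ^ n.-1 * n`!)%N.
Proof.
pose i0 := Ordinal hn; pose e := [ffun i : 'I_n => i == i0].
pose fl := fun x : {ffun 'I_n -> bool} * 'S_n => (bmul x.1 1 e, x.2).
have fl_inv : involutive fl.
  move=> [b p]; rewrite /fl /=; congr pair; apply/ffunP=> i.
  by rewrite !ffunE perm1 -addbA addbb addbF.
have fl_inj := inv_inj fl_inv.
have E : fl @: SBset = ~: SBset.
  apply/setP=> x; rewrite inE; apply/imsetP/idP.
  - case=> y; rewrite inE => hy ->; rewrite inE /fl /= par_bmul par_e.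
    by move/eqP: hy => ->; case: (odd_perm _).
  - rewrite inE => hx; exists (fl x); last by rewrite fl_inv.
    rewrite inE /fl /= par_bmul par_e.
    by move: hx; case: (par x.1); case: (odd_perm x.2).
have := cardsC SBset; rewrite -E card_imset //.
rewrite card_prod card_ffun card_bool !card_ord card_Sn.
have -> : (2 ^ n = 2 * 2 ^ n.-1)%N by rewrite -expnS prednK.
rewrite addnn -mul2n -mulnA => /eqP.
by rewrite eqn_pmul2l // => /eqP.
Qed.

End Count.
Section Odd.
Variable n : nat.
Implicit Types (b c : {ffun 'I_n -> bool}) (p q : 'S_n).

Definition rs (M : 'M[algC]_n) : algC := \prod_i \sum_j M i j.
Definition fiso (M : 'M[algC]_n) := rs M *: M.

Lemma f_mk b p : fiso (mk b p) = mk (bx b (par b)) p.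
Proof.
rewrite /fiso /rs (eq_bigr (fun i => sg (b i))) ?prod_sg ?sg_scale // => i _.
exact: rowsum_mk.
Qed.

Lemma iso_odd : odd n -> mx_group_isomorphic (@Mn12 n) (@G22n n).
Proof.
move=> ho; exists fiso; split.
- move=> A /Mn12_mk [b [p [-> hb]]]; apply/G22n_mk.
  by exists (bx b (par b)), p; rewrite f_mk par_bx ho; split => //; case: (par b).
- move=> A B /Mn12_mk [b [p [-> hb]]] /Mn12_mk [c [q [-> hc]]].
  rewrite !f_mk => /mk_inj [ebx epq]; subst q.
  have pbc : par b = par c by rewrite hb hc.
  congr mk; apply/ffunP=> i; have := congr1 (fun f : {ffun 'I_n -> bool} => f i) ebx.
  by rewrite !ffunE pbc; case: (b i); case: (c i); case: (par c).
- move=> C /G22n_mk [c [q [-> hc]]].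
  exists (mk (bx c (odd_perm q)) q).
    by apply: Mn12_gen; rewrite par_bx hc ho.
  rewrite f_mk par_bx hc ho /=; congr mk; apply/ffunP=> i.
  by rewrite !ffunE -addbA addbb addbF.
- move=> A B /Mn12_mk [b [p [-> hb]]] /Mn12_mk [c [q [-> hc]]].
  rewrite mkM !f_mk mkM par_bmul; congr mk; apply/ffunP=> i.
  by rewrite !ffunE; case: (b i); case: (c (p i)); case: (par b); case: (par c).
Qed.

End Odd.
Lemma porbit_dvd (T : finType) (s : {perm T}) x k :
  ((s ^+ k)%g x == x) = (#|porbit s x| %| k)%N.
Proof.
set d := #|porbit s x|.
have idd : iter d s x = x by exact: iter_porbit.
have hq q : (s ^+ (q * d))%g x = x.
  elim: q => [|q IH]; first by rewrite mul0n expg0 perm1.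
  by rewrite mulSn expgD permM [(s ^+ d)%g x]permX idd IH.
have d0 : (0 < d)%N by rewrite lt0n card_porbit_neq0.
apply/eqP/idP => [H|]; last by case/dvdnP=> q ->; rewrite hq.
move: H; rewrite {1}(divn_eq k d) expgD permM hq permX => H.
rewrite /dvdn; apply/eqP.
have U : uniq (traject s x d) by exact: uniq_traject_porbit.
have r_lt : (k %% d < d)%N := ltn_pmod k d0.
have := @nth_uniq _ x (traject s x d) (k %% d) 0; rewrite size_traject => /(_ r_lt d0 U).
by rewrite !nth_traject //= H eqxx => /esym/eqP.
Qed.

Lemma odd_count (I : finType) (P : {set I}) (d : I -> nat) N :
  (0 < N)%N -> (forall i, i \in P -> (d i %| N)%N /\ odd (N %/ d i)) ->
  (\sum_(i in P) d i)%N = N -> odd #|P|.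
Proof.
move=> N0 Hd Hs.
pose g i := (N %/ d i)%N.
pose G := (\prod_(i in P) g i)%N.
pose R i := (\prod_(j in P | j != i) g j)%N.
have oddP (Q : pred I) : (forall j, Q j -> j \in P) -> odd (\prod_(j | Q j) g j).
  move=> QP; apply: (big_ind (fun m => odd m)) => //; first by move=> a b oa ob; rewrite oddM oa ob.
  by move=> i /QP iP; case: (Hd i iP).
have E i : i \in P -> (d i * G = N * R i)%N.
  move=> iP; rewrite /G (bigD1 i) //= mulnA.
  by case: (Hd i iP) => di _; rewrite /g [(d i * _)%N]mulnC divnK.
have : (N * \sum_(i in P) R i = N * G)%N.
  rewrite big_distrr /= -[in RHS]Hs big_distrl /=.
  by apply: eq_bigr => i iP; rewrite E.
move/eqP; rewrite eqn_pmul2l // => /eqP HG.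
have : odd G by apply: oddP.
rewrite -HG (big_morph odd (id1 := false) (op1 := addb) oddD) //.
rewrite (eq_bigr (fun _ => true)) => [|i _]; last by apply: oddP => j /andP[].
rewrite big_const; elim: #|P| => //= m IH; rewrite /=; by case: (iter m _ _) IH => /= ->.
Qed.
Section Core.
Variable n : nat.
Implicit Types (b c : {ffun 'I_n -> bool}) (p q : 'S_n).
Local Notation T := ('I_n * bool)%type.

Definition pd_fun b (x : T) : T := (x.1, x.2 (+) b x.1).
Lemma pd_inj b : injective (pd_fun b).
Proof. by move=> [i s] [j t] /= [eij]; subst j => /addIb ->. Qed.
Definition pd b : {perm T} := perm (@pd_inj b).

Definition pp_fun p (x : T) : T := (p x.1, x.2).
Lemma pp_inj p : injective (pp_fun p).
Proof. by move=> [i s] [j t] /= [/perm_inj -> ->]. Qed.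
Definition pp p : {perm T} := perm (@pp_inj p).

Lemma ppM p q : pp (p * q) = (pp p * pp q)%g.
Proof. by apply/permP=> [[i s]]; rewrite permM !permE /pp_fun /= permM. Qed.

Lemma pp_tperm (a c : 'I_n) :
  pp (tperm a c) = (tperm (a, false) (c, false) * tperm (a, true) (c, true))%g.
Proof.
apply/permP=> [[j s]]; rewrite permM permE /pp_fun /=.
case: s.
- rewrite (tpermD (x := (a, false))) ?(@inj_tperm _ _ (fun k : 'I_n => (k, true))) //;
    [by move=> ? ? []|by rewrite xpair_eqE andbF|by rewrite xpair_eqE andbF].
- rewrite -(@inj_tperm _ _ (fun k : 'I_n => (k, false))) ?(tpermD (x := (a, true))) //;
    [by rewrite xpair_eqE andbF|by rewrite xpair_eqE andbF|by move=> ? ? []].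
Qed.

Lemma odd_pp p : odd_perm (pp p) = false.
Proof.
have [ts -> _] := prod_tpermP p.
elim: ts => [|[a c] ts IH] /=.
  rewrite big_nil; have -> : pp 1 = 1%g by apply/permP=> x; rewrite !permE /pp_fun perm1; case: x.
  exact: odd_perm1.
rewrite big_cons ppM odd_permM IH pp_tperm odd_permM !odd_tperm /= !xpair_eqE !andbT.
by rewrite addbb.
Qed.

Lemma odd_pd b : odd_perm (pd b) = par b.
Proof.
have [k] := ubnP #|[set i | b i]|; elim: k b => // k IH b; rewrite ltnS => Hk.
have [E0 | ] := eqVneq [set i | b i] set0.
  have bF0 : b = bF.
    apply/ffunP=> i; rewrite ffunE; apply/negbTE; apply/negP => ci.
    have : i \in [set i | b i] by rewrite inE.
    by rewrite E0 inE.
  have -> : pd b = 1%g by apply/permP=> [[i s]]; rewrite perm1 permE /pd_fun bF0 ffunE addbF.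
  by rewrite odd_perm1 bF0 par_bF.
case/set0Pn => j; rewrite inE => bj.
pose b' := [ffun i => b i && (i != j)].
have E : pd b = (tperm (j, false) (j, true) * pd b')%g.
  apply/permP=> [[i s]]; rewrite permM !permE /pd_fun /=.
  have [eij|nij] := eqVneq i j.
    by subst i; case: s; rewrite !xpair_eqE ?eqxx /= ffunE eqxx andbF bj.
  by rewrite !xpair_eqE (negbTE nij) /= ffunE nij andbT.
have Hp : par b = true (+) par b'.
  rewrite /par (bigD1 j) //= [in RHS](bigD1 j) //= bj ffunE eqxx andbF /=.
  congr (~~ _); apply: eq_bigr => i nij; by rewrite ffunE nij andbT.
have -> : odd_perm (pd b) = odd_perm (tperm (j, false) (j, true) * pd b')%g by rewrite E.
rewrite odd_mul_tperm xpair_eqE eqxx /= IH ?Hp //.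
have sub : [set i | b' i] \subset [set i | b i] :\ j.
  by apply/subsetP=> i; rewrite !inE ffunE => /andP[-> ->].
apply: leq_ltn_trans (subset_leq_card sub) _.
by rewrite (cardsD1 j [set i | b i]) inE bj add1n in Hk.
Qed.

Definition bpow b p k := iter k (bmul b p) bF.

Lemma bpowS b p k i : bpow b p k.+1 i = b i (+) bpow b p k (p i).
Proof. by rewrite /bpow /= ffunE. Qed.

Lemma piX b p k (x : T) :
  ((pd b * pp p) ^+ k)%g x = ((p ^+ k)%g x.1, x.2 (+) bpow b p k x.1).
Proof.
elim: k x => [|k IH] [i s]; first by rewrite !expg0 !perm1 /bpow /= ffunE addbF.
rewrite expgS permM IH !permM !permE /pd_fun /pp_fun /= bpowS.
by rewrite expgS permM addbA.
Qed.

Lemma core b p : (0 < n)%N -> (p ^+ n = 1)%g -> (forall i, bpow b p n i) -> par b.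
Proof.
move=> n0 pn bn; set pi := (pd b * pp p)%g.
have pin x : (pi ^+ n)%g x = (x.1, ~~ x.2).
  by rewrite piX pn perm1 bn addbT.
have Hd x : (#|porbit pi x| %| n + n)%N /\ odd ((n + n) %/ #|porbit pi x|).
  have d1 : (#|porbit pi x| %| n + n)%N.
    by rewrite -porbit_dvd expgD permM !pin; case: x => i s /=; rewrite negbK.
  split=> //; apply: contraT => ev.
  have : (#|porbit pi x| %| n)%N.
    move: d1 ev; set d := #|porbit pi x| => d1 ev.
    have := divnK d1; rewrite -(odd_double_half ((n+n) %/ d)) (negbTE ev) add0n.
    rewrite -mul2n -mulnA addnn -mul2n => /eqP; rewrite eqn_pmul2l // => /eqP <-.
    exact: dvdn_mull.
  rewrite -porbit_dvd pin; case: (x) => i s /=; rewrite xpair_eqE eqxx /=.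
  by case: s.
have Hsum : (\sum_(O in porbits pi) #|O|)%N = (n + n)%N.
  have : (\sum_(x in {: T}) 1)%N = (n + n)%N.
    by rewrite sum1_card card_prod card_ord card_bool muln2 addnn.
  rewrite (partition_big_imset (porbit pi)) /= => <-.
  apply: eq_bigr => _ /imsetP[y _ ->]; rewrite -sum1_card.
  apply: eq_bigl => x; by rewrite eq_porbit_mem.
have oP : odd #|porbits pi|.
  apply: (odd_count (d := fun O : {set T} => #|O|) _ _ Hsum); first by rewrite addn_gt0 n0.
  by move=> _ /imsetP[y _ ->]; exact: Hd y.
have : odd_perm pi by rewrite /odd_perm oP card_prod card_ord card_bool muln2 /= odd_double.
by rewrite /pi odd_permM odd_pd odd_pp addbF.
Qed.

End Core.
Lemma S2sq (p : 'S_2) : (p ^+ 2)%g = 1%g.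
Proof.
have other (x y z : 'I_2) : x != z -> y != z -> x = y.
  move: x y z => [[|[|x]] hx] [[|[|y]] hy] [[|[|z]] hz] //= _ _; by apply: val_inj.
apply/permP => i; rewrite perm1 expgS expg1 permM.
have [e|ne] := eqVneq (p i) i; first by rewrite e e.
apply: (other _ _ (p i)) => //.
  by rewrite (inj_eq perm_inj).
by rewrite eq_sym.
Qed.

Lemma sqn m (p : 'S_m) : m = 2 -> (p ^+ m)%g = 1%g.
Proof. by move=> e; subst m; exact: S2sq. Qed.

Section Even.
Variable n : nat.
Implicit Types (b c : {ffun 'I_n -> bool}) (p q : 'S_n).

Definition mxpow (A : 'M[algC]_n) k := iter k (mulmx A) 1%:M.

Lemma mxpow_mk b p k : mxpow (mk b p) k = mk (bpow b p k) (p ^+ k)%g.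
Proof.
elim: k => [|k IH]; first by rewrite /mxpow /= -mk1.
by rewrite /mxpow iterS -/(mxpow (mk b p) k) IH mkM expgS.
Qed.

Lemma bpowE b p k i : bpow b p k i = \big[addb/false]_(j < k) b ((p ^+ j)%g i).
Proof.
elim: k i => [|k IH] i; first by rewrite big_ord0 /bpow /= ffunE.
rewrite bpowS IH big_ord_recl expg0 perm1; congr addb; apply: eq_bigr => j _.
by rewrite lift0 expgS permM.
Qed.

Definition rot : 'S_n := perm (@ordS_inj n).

Lemma rotX k (i : 'I_n) : val ((rot ^+ k)%g i) = ((i + k) %% n)%N.
Proof.
elim: k => [|k IH]; first by rewrite expg0 perm1 addn0 modn_small.
by rewrite expgSr permM permE /= IH -addn1 modnDml addn1 addnS.
Qed.

Lemma rot_n : (0 < n)%N -> (rot ^+ n)%g = 1%g.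
Proof.
move=> n0; apply/permP => i; apply/val_inj.
by rewrite rotX perm1 modnDr modn_small.
Qed.

Lemma odd_rot (n0 : (0 < n)%N) : odd_perm rot = ~~ odd n.
Proof.
pose i0 := Ordinal n0.
rewrite /odd_perm.
have -> : porbits rot = [set porbit rot i0].
  apply/setP => O; rewrite inE; apply/imsetP/eqP => [[x _ ->]|->]; last by exists i0.
  apply/eqP; rewrite eq_porbit_mem; apply/porbitP; exists x; apply/val_inj.
  by rewrite rotX /= add0n modn_small.
by rewrite card_ord cards1 addbT.
Qed.

Lemma zc_comm b p : mk bT 1 *m mk b p = mk b p *m mk bT 1.
Proof.
rewrite !mkM mul1g mulg1; congr mk; apply/ffunP=> i.
by rewrite !ffunE perm1 addbC.
Qed.

Lemma Mn12_pow x k : Mn12 x -> Mn12 (mxpow x k).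
Proof.
move=> hx; elim: k => [|k IH]; first exact: (@Mn12_one n).
by rewrite /mxpow iterS; apply: Mn12_mul.
Qed.

Lemma center_triv q : (2 < n)%N -> (forall t : 'S_n, q * t = t * q)%g -> q = 1%g.
Proof.
move=> n2 hq; apply/permP => i; rewrite perm1; apply/eqP; apply: contraT => ne.
have : (0 < #|~: [set i; q i]|)%N.
  rewrite -(leq_add2l #|[set i; q i]|) addn1 cardsC card_ord.
  by apply: leq_ltn_trans n2; rewrite cards2; case: (_ != _).
rewrite card_gt0 => /set0Pn [j]; rewrite !inE => /norP [ji jq].
have := congr1 (fun s : 'S_n => s i) (hq (tperm i j)); rewrite !permM tpermL.
rewrite tpermD ?(eq_sym i) // => /perm_inj eij.
by move: ji; rewrite -eij eqxx.
Qed.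

Lemma even_noiso : (1 < n)%N -> ~~ odd n -> ~ mx_group_isomorphic (@Mn12 n) (@G22n n).
Proof.
move=> hn ev [f [fGH finj fsurj fmul]].
have n0 : (0 < n)%N by apply: ltnW.
pose i0 := Ordinal n0.
have H1 : Mn12 (1%:M : 'M[algC]_n) := @Mn12_one n.
have f1 : f 1%:M = 1%:M.
  have := fmul _ _ H1 H1; rewrite mul1mx.
  case/G22n_mk: (fGH _ H1) => c [q [E _]]; rewrite E => e.
  have := congr1 (mulmx (invmx (mk c q))) e.
  by rewrite mulmxA mulVmx ?mk_unitmx // mul1mx => <-.
have fpow x k : Mn12 x -> f (mxpow x k) = mxpow (f x) k.
  move=> hx; elim: k => [|k IH]; first exact: f1.
  change (f (x *m mxpow x k) = f x *m mxpow (f x) k).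
  by rewrite fmul ?IH //; exact: Mn12_pow.
pose bw := [ffun i : 'I_n => i == i0].
pose x0 := mk bw rot.
have hx0 : Mn12 x0 by apply: Mn12_gen; rewrite par_e odd_rot ?ev.
have hz : mxpow x0 n = mk bT 1.
  rewrite mxpow_mk rot_n //; congr mk; apply/ffunP=> i.
  rewrite bpowE ffunE.
  rewrite -(@reindex_inj _ _ _ _ (fun j : 'I_n => (rot ^+ j)%g i) xpredT bw).
    by have := par_e i0.
  move=> j1 j2 /(congr1 val); rewrite !rotX => /eqP; rewrite eqn_modDl !modn_small //.
  by move/eqP/val_inj.
case/G22n_mk: (fGH _ hx0) => b [p [Ey hb]].
have hz1 : mxpow (f x0) n != 1%:M.
  apply/eqP; rewrite -fpow // -f1 => /finj.
  move=> /(_ (Mn12_pow n hx0) H1); rewrite hz -mk1 => /mk_inj [/ffunP/(_ i0)].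
  by rewrite !ffunE.
have hcomm C : G22n C -> mxpow (f x0) n *m C = C *m mxpow (f x0) n.
  case/fsurj => A hA <-.
  have e1 := fmul _ _ (Mn12_pow n hx0) hA.
  have e2 := fmul _ _ hA (Mn12_pow n hx0).
  rewrite -(fpow _ _ hx0) -e1 -e2 hz.
  by case/Mn12_mk: hA => b' [p' [-> _]]; rewrite zc_comm.
move: hz1 hcomm; rewrite Ey mxpow_mk.
set c := bpow b p n; set q := (p ^+ n)%g => hz1 hcomm.
have hq t : (q * t = t * q)%g /\ forall i, c i = c (t i).
  have H : G22n (mk bF t) by apply/G22n_mk; exists bF, t; rewrite par_bF.
  have := hcomm _ H; rewrite !mkM => /mk_inj [/ffunP Ec ->]; split => // i.
  by have := Ec i; rewrite !ffunE addbF.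
have q1 : q = 1%g.
  have [n2|n2] := eqVneq n 2; first exact: sqn.
  apply: center_triv; first by rewrite ltn_neqAle eq_sym n2 hn.
  by move=> t; case: (hq t).
have cc i : c i = c i0.
  by case: (hq (tperm i0 i)) => _ /(_ i0); rewrite tpermL => ->.
case h0 : (c i0).
  have : par b.
    apply: (@core _ b p n0); first by rewrite -/q q1.
    by move=> i; rewrite -/c cc h0.
  by rewrite hb.
move: hz1; rewrite q1 (_ : c = bF) ?mk1 ?eqxx //.
by apply/ffunP => i; rewrite ffunE cc h0.
Qed.

End Even.

Unset Implicit Arguments.

Theorem mainTheorem19 (n : nat) (hn : (2 <= n)%N) :
  [/\ (forall M : 'M[algC]_n, Mn12 M <-> (signed_perm_mx M /\ \det M = 1)),
      (exists s : seq 'M[algC]_n,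
         [/\ uniq s, size s = (2 ^ n.-1 * n`!)%N &
             forall M, Mn12 M <-> M \in s]) &
      (mx_group_isomorphic (@Mn12 n) (@G22n n) <-> odd n)].
Proof.
split.
- exact: part1.
- exists [seq mk x.1 x.2 | x <- enum (SBset n)]; split.
  + rewrite map_inj_uniq ?enum_uniq // => [[b p] [c q]] /= /mk_inj [-> ->] //.
  + by rewrite size_map -cardE card_SB // ltnW.
  + move=> M; split.
      case/Mn12_mk => b [p [-> h]]; apply/mapP; exists (b, p) => //.
      by rewrite mem_enum inE h eqxx.
    case/mapP => [[b p]]; rewrite mem_enum inE /= => /eqP h ->; exact: Mn12_gen.
- split; last exact: iso_odd.
  move=> H; apply/negPn/negP => ev; exact: (even_noiso hn ev H).
Qed.
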